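(* Let $A>0$, $\phi>0$, $0<\gamma<1$, and $\alpha,\beta>0$ with $\alpha+\beta<1$. Consider the map $F_C:(0,\infty)^2\to(0,\infty)^2$, $$F_C(k,N)=\left(A\left[2\left(\frac{\alpha}{1-\alpha}\right)\phi\, k^{2}N^{\gamma}\right]^{\alpha}k^{\beta},\ \left(\frac{1-\alpha}{4\phi k}\right)N^{1-\gamma}\right).$$ Then $F_C$ has a unique fixed point $(\bar k_C,\bar N_C)$ with $\bar k_C,\bar N_C>0$, and $$\bar k_C=\bar k_S,\qquad \bar N_C=\Omega\,\bar N_S,\qquad \Omega=\frac{1}{2^{1/\gamma}}\in(0,1),$$ where $$\bar k_S=\left(A^{1/\alpha}\frac{\alpha}{2}\right)^{\frac{\alpha}{1-\beta-\alpha}},\qquad \bar N_S=A^{\frac{-1}{(1-\beta-\alpha)\gamma}}\left(\frac{1-\alpha}{2\phi}\right)^{\frac{1-\beta-2\alpha}{(1-\beta-\alpha)\gamma}}\left[\left(\frac{\alpha}{1-\alpha}\right)\phi\right]^{\frac{-\alpha}{(1-\beta-\alpha)\gamma}}$$ is the unique positive fixed point of the map $F_S(k,N)=\left(A\left[\frac{\alpha}{1-\alpha}\phi k^2N^{\gamma}\right]^{\alpha}k^{\beta},\ \frac{1-\alpha}{2\phi k}N^{1-\gamma}\right)$.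
   Context: Overlapping-generations model with human capital $k_t$ and adult population $N_t$. $F_C$ describes the case where father's and mother's childcare times are perfect complements: optimal fertility $n^*(k,N)=\frac{1-\alpha}{4\phi kN^{\gamma}}$ and education spending $e^*(k,N)=2\frac{\alpha}{1-\alpha}\phi k^2N^{\gamma}$, with $k_{t+1}=Ae^{*\alpha}k_t^{\beta}$, $N_{t+1}=n^*N_t$. $F_S$ is the analogous map for the perfect-substitutes case. ''Economically meaningful'' means both coordinates strictly positive. *)

(* Defs.v *)
From Stdlib Require Import Reals.
Open Scope R_scope.

Definition F_C (A phi gamma alpha beta : R) (k N : R) : R * R :=
  ( A * Rpower (2 * (alpha / (1 - alpha)) * phi * k ^ 2 * Rpower N gamma) alpha
      * Rpower k beta,
    ((1 - alpha) / (4 * phi * k)) * Rpower N (1 - gamma) ).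

Definition F_S (A phi gamma alpha beta : R) (k N : R) : R * R :=
  ( A * Rpower ((alpha / (1 - alpha)) * phi * k ^ 2 * Rpower N gamma) alpha
      * Rpower k beta,
    ((1 - alpha) / (2 * phi * k)) * Rpower N (1 - gamma) ).

Definition k_S (A phi gamma alpha beta : R) : R :=
  Rpower (Rpower A (1 / alpha) * (alpha / 2)) (alpha / (1 - beta - alpha)).

Definition N_S (A phi gamma alpha beta : R) : R :=
  Rpower A (-1 / ((1 - beta - alpha) * gamma))
  * Rpower ((1 - alpha) / (2 * phi)) ((1 - beta - 2 * alpha) / ((1 - beta - alpha) * gamma))
  * Rpower ((alpha / (1 - alpha)) * phi) (- alpha / ((1 - beta - alpha) * gamma)).

Definition Omega (gamma : R) : R := 1 / Rpower 2 (1 / gamma).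

(* Main.v *)
Require Import Defs.
From Stdlib Require Import Reals Lra.
Open Scope R_scope.

Lemma lnR x y : ln (Rpower x y) = y * ln x.
Proof. unfold Rpower; apply ln_exp. Qed.

Lemma RposR x y : 0 < Rpower x y.
Proof. unfold Rpower; apply exp_pos. Qed.

Lemma gen (A c d gamma alpha beta k N : R)
  (hA : 0 < A) (hc : 0 < c) (hd : 0 < d) (hg0 : 0 < gamma)
  (ha : 0 < alpha) (hb : 0 < beta) (hab : alpha + beta < 1)
  (hcd : c * d = alpha / 2) (hk : 0 < k) (hN : 0 < N) :
  (k = A * Rpower (c * k ^ 2 * Rpower N gamma) alpha * Rpower k beta /\
   N = d / k * Rpower N (1 - gamma)) <->
  (ln k = (ln A + alpha * ln (alpha / 2)) / (1 - alpha - beta) /\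
   ln N = (ln d - (ln A + alpha * ln (alpha / 2)) / (1 - alpha - beta)) / gamma).
Proof.
  assert (Hcd : ln (alpha / 2) = ln c + ln d).
  { rewrite <- hcd. apply ln_mult; auto. }
  assert (Hk2 : ln (k ^ 2) = 2 * ln k).
  { replace (k ^ 2) with (k * k) by ring. rewrite ln_mult; auto; ring. }
  assert (P1 : 0 < c * k ^ 2 * Rpower N gamma).
  { apply Rmult_lt_0_compat; [apply Rmult_lt_0_compat; auto; apply pow_lt; auto | apply RposR]. }
  assert (L1 : ln (A * Rpower (c * k ^ 2 * Rpower N gamma) alpha * Rpower k beta)
     = ln A + alpha * (ln c + 2 * ln k + gamma * ln N) + beta * ln k).
  { assert (R1 := RposR (c * k ^ 2 * Rpower N gamma) alpha).
    assert (R2 := RposR k beta). assert (R3 := RposR N gamma).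
    assert (K2 : 0 < k ^ 2) by (apply pow_lt; auto).
    rewrite (ln_mult _ _ (Rmult_lt_0_compat _ _ hA R1) R2).
    rewrite (ln_mult _ _ hA R1), !lnR.
    rewrite (ln_mult _ _ (Rmult_lt_0_compat _ _ hc K2) R3).
    rewrite (ln_mult _ _ hc K2), lnR, Hk2. ring. }
  assert (L2 : ln (d / k * Rpower N (1 - gamma)) = ln d - ln k + (1 - gamma) * ln N).
  { unfold Rdiv. rewrite ln_mult, ln_mult, lnR, ln_Rinv; auto; try ring;
      try apply RposR; try apply Rmult_lt_0_compat; auto; apply Rinv_0_lt_compat; auto. }
  assert (Q1 : 0 < A * Rpower (c * k ^ 2 * Rpower N gamma) alpha * Rpower k beta).
  { apply Rmult_lt_0_compat; [apply Rmult_lt_0_compat; auto|]; apply RposR. }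
  assert (Q2 : 0 < d / k * Rpower N (1 - gamma)).
  { apply Rmult_lt_0_compat; [apply Rdiv_lt_0_compat; auto | apply RposR]. }
  split.
  - intros [E1 E2].
    assert (F1 : ln k = ln A + alpha * (ln c + 2 * ln k + gamma * ln N) + beta * ln k)
      by (rewrite <- L1; congruence).
    assert (F2 : ln N = ln d - ln k + (1 - gamma) * ln N)
      by (rewrite <- L2; congruence).
    assert (G2 : gamma * ln N = ln d - ln k) by lra.
    assert (G1 : ln k * (1 - alpha - beta) = ln A + alpha * (ln c + ln d)) by nra.
    rewrite Hcd.
    assert (X : ln k = (ln A + alpha * (ln c + ln d)) / (1 - alpha - beta))
      by (rewrite <- G1; field; lra).
    split; [exact X|]. rewrite <- X. rewrite <- G2. field; lra.
  - rewrite Hcd. intros [E1 E2].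
    split; apply ln_inv; auto.
    + rewrite L1.
      assert (G2 : gamma * ln N = ln d - ln k) by (rewrite E2, E1; field; lra).
      replace (alpha * (ln c + 2 * ln k + gamma * ln N))
        with (alpha * (ln c + 2 * ln k) + alpha * (gamma * ln N)) by ring.
      rewrite G2. rewrite E1. field; lra.
    + rewrite L2.
      assert (G2 : gamma * ln N = ln d - ln k) by (rewrite E2, E1; field; lra).
      lra.
Qed.

Lemma FS_iff (A phi gamma alpha beta k N : R) (hphi : 0 < phi) (ha : alpha < 1) (hk : 0 < k) :
  F_S A phi gamma alpha beta k N = (k, N) <->
  (k = A * Rpower ((alpha / (1 - alpha)) * phi * k ^ 2 * Rpower N gamma) alpha * Rpower k beta /\
   N = ((1 - alpha) / (2 * phi)) / k * Rpower N (1 - gamma)).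
Proof.
  unfold F_S.
  replace ((1 - alpha) / (2 * phi * k)) with (((1 - alpha) / (2 * phi)) / k) by (field; lra).
  split; [intros H; injection H; auto | intros [H1 H2]; rewrite <- H1, <- H2 at 1; f_equal; auto].
Qed.

Lemma FC_iff (A phi gamma alpha beta k N : R) (hphi : 0 < phi) (ha : alpha < 1) (hk : 0 < k) :
  F_C A phi gamma alpha beta k N = (k, N) <->
  (k = A * Rpower (2 * (alpha / (1 - alpha)) * phi * k ^ 2 * Rpower N gamma) alpha * Rpower k beta /\
   N = ((1 - alpha) / (4 * phi)) / k * Rpower N (1 - gamma)).
Proof.
  unfold F_C.
  replace ((1 - alpha) / (4 * phi * k)) with (((1 - alpha) / (4 * phi)) / k) by (field; lra).
  split; [intros H; injection H; auto | intros [H1 H2]; rewrite <- H1, <- H2 at 1; f_equal; auto].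
Qed.

Theorem proposition3 (A phi gamma alpha beta : R)
  (hA : 0 < A) (hphi : 0 < phi) (hg0 : 0 < gamma) (hg1 : gamma < 1)
  (ha : 0 < alpha) (hb : 0 < beta) (hab : alpha + beta < 1) :
  (* (k_S, N_S) is the unique positive fixed point of F_S *)
  (0 < k_S A phi gamma alpha beta /\ 0 < N_S A phi gamma alpha beta /\
   F_S A phi gamma alpha beta (k_S A phi gamma alpha beta) (N_S A phi gamma alpha beta)
     = (k_S A phi gamma alpha beta, N_S A phi gamma alpha beta) /\
   forall k N, 0 < k -> 0 < N -> F_S A phi gamma alpha beta k N = (k, N) ->
     k = k_S A phi gamma alpha beta /\ N = N_S A phi gamma alpha beta) /\
  (* F_C has a unique positive fixed point (k_C, N_C), with k_C = k_S, N_C = Omega N_S *)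
  (exists kC NC : R,
     0 < kC /\ 0 < NC /\ F_C A phi gamma alpha beta kC NC = (kC, NC) /\
     (forall k N, 0 < k -> 0 < N -> F_C A phi gamma alpha beta k N = (k, N) ->
        k = kC /\ N = NC) /\
     kC = k_S A phi gamma alpha beta /\
     NC = Omega gamma * N_S A phi gamma alpha beta) /\
  0 < Omega gamma < 1.
Proof.
  set (c := alpha / (1 - alpha) * phi).
  set (d := (1 - alpha) / (2 * phi)).
  assert (hc : 0 < c) by (unfold c; apply Rmult_lt_0_compat; auto; apply Rdiv_lt_0_compat; lra).
  assert (hd : 0 < d) by (unfold d; apply Rdiv_lt_0_compat; lra).
  assert (hcd : c * d = alpha / 2) by (unfold c, d; field; lra).
  assert (hc2 : 0 < 2 * (alpha / (1 - alpha)) * phi) by (replace (2 * (alpha / (1 - alpha)) * phi) with (2 * c) by (unfold c; ring); lra).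
  assert (hd2 : 0 < (1 - alpha) / (4 * phi)) by (apply Rdiv_lt_0_compat; lra).
  assert (hcd2 : 2 * (alpha / (1 - alpha)) * phi * ((1 - alpha) / (4 * phi)) = alpha / 2)
    by (field; lra).
  assert (ld2 : ln ((1 - alpha) / (4 * phi)) = ln d - ln 2).
  { replace ((1 - alpha) / (4 * phi)) with (d * / 2) by (unfold d; field; lra).
    rewrite ln_mult, ln_Rinv; lra. }
  assert (Hcd : ln (alpha / 2) = ln c + ln d) by (rewrite <- hcd; apply ln_mult; auto).
  set (X := (ln A + alpha * ln (alpha / 2)) / (1 - alpha - beta)).
  assert (kpos : 0 < k_S A phi gamma alpha beta) by (unfold k_S; apply RposR).
  assert (Npos : 0 < N_S A phi gamma alpha beta)
    by (unfold N_S; repeat apply Rmult_lt_0_compat; apply RposR).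
  assert (lk : ln (k_S A phi gamma alpha beta) = X).
  { unfold k_S, X. rewrite lnR, ln_mult, lnR; try apply RposR; try lra.
    field; lra. }
  assert (lN : ln (N_S A phi gamma alpha beta) = (ln d - X) / gamma).
  { unfold N_S, X.
    rewrite ln_mult, ln_mult, !lnR; try apply RposR;
      try apply Rmult_lt_0_compat; try apply RposR.
    fold c d. rewrite Hcd. field; lra. }
  assert (Opos : 0 < Omega gamma) by (unfold Omega; apply Rdiv_lt_0_compat; [lra | apply RposR]).
  assert (ln2 : 0 < ln 2) by (rewrite <- ln_1; apply ln_increasing; lra).
  assert (lO : ln (Omega gamma) = - (ln 2 / gamma)).
  { unfold Omega, Rdiv. rewrite Rmult_1_l, ln_Rinv, lnR; [field; lra | apply RposR]. }
  split; [|split].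
  - split; [exact kpos|split; [exact Npos|split]].
    + apply FS_iff; try lra. fold c d.
      apply gen; try assumption; try lra. split; [exact lk|]. rewrite lN. reflexivity.
    + intros k N hk hN H. apply FS_iff in H; try lra. fold c d in H.
      apply gen in H; auto; try lra. destruct H as [H1 H2]. fold X in H1, H2.
      split; apply ln_inv; auto; congruence.
  - exists (k_S A phi gamma alpha beta), (Omega gamma * N_S A phi gamma alpha beta).
    assert (lNC : ln (Omega gamma * N_S A phi gamma alpha beta)
                  = (ln ((1 - alpha) / (4 * phi)) - X) / gamma).
    { rewrite ln_mult, lO, lN, ld2; auto. field; lra. }
    assert (NCpos : 0 < Omega gamma * N_S A phi gamma alpha beta)
      by (apply Rmult_lt_0_compat; auto).
    split; [exact kpos|split; [exact NCpos|split; [|split; [|split; reflexivity]]]].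
    + apply FC_iff; try lra.
      apply gen; try assumption; try lra. split; [exact lk|]. rewrite lNC. reflexivity.
    + intros k N hk hN H. apply FC_iff in H; try lra.
      apply gen in H; auto; try lra. destruct H as [H1 H2]. fold X in H1, H2.
      split; apply ln_inv; auto; congruence.
  - split; [exact Opos|].
    apply Rlt_le_trans with (exp 0); [| rewrite exp_0; lra].
    rewrite <- (exp_ln _ Opos). apply exp_increasing. rewrite lO.
    assert (0 < ln 2 / gamma) by (apply Rdiv_lt_0_compat; auto). lra.
Qed.
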